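(* Let $d\geq1$ be an integer and $\mathbb G=V_1\times V_2$ a step-two Carnot group. Then $\mathcal A_h(\mathbb G)=\mathcal A(V_1\times V_2)$ if and only if $\mathcal A_h(\mathbb G\times\mathbb R^d)=\mathcal A((V_1\oplus\mathbb R^d)\times V_2)$.
   Context: A step-two Carnot group is $\mathbb G=V_1\times V_2$ ($V_1,V_2$ finite-dimensional real vector spaces, $V_2\ne\{0\}$) with a bilinear skew-symmetric $[\cdot,\cdot]:V_1\times V_1\to V_2$ whose image spans $V_2$, and group law $(x,z)\cdot(x',z')=(x+x',z+z'+[x,x'])$. $\mathcal A_h(\mathbb G)$ is the space of maps $f:\mathbb G\to\mathbb R$ such that for all $(x,z)\in\mathbb G$, $y\in V_1$, $t\mapsto f((x,z)\cdot(ty,0))$ is affine; $\mathcal A(W)$ is the space of maps affine in the usual sense on a vector space $W$. $\mathbb G\times\mathbb R^d$ is the step-two Carnot group $(V_1\oplus\mathbb R^d)\times V_2$ with bracket $[x+u,x'+u']:=[x,x']$ for $x,x'\in V_1$, $u,u'\in\mathbb R^d$. *)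

(* Defs.v *)
From HB Require Import structures.
From mathcomp Require Import all_boot all_order all_algebra.
From mathcomp Require Import reals.
Set Implicit Arguments. Unset Strict Implicit. Unset Printing Implicit Defensive.
Import Order.TTheory GRing.Theory Num.Theory.
Local Open Scope ring_scope.

Section Carnot.
Variable R : realType.

Definition cmul (V1 V2 : lmodType R) (br : V1 -> V1 -> V2)
  (p q : V1 * V2) : V1 * V2 :=
  (p.1 + q.1, p.2 + q.2 + br p.1 q.1).

Definition step_two_carnot (n m : nat) (br : 'rV[R]_n -> 'rV[R]_n -> 'rV[R]_m) :=
  [/\ (0 < m)%N,
      (forall a x x' y, br (a *: x + x') y = a *: br x y + br x' y),
      (forall a x y y', br x (a *: y + y') = a *: br x y + br x y'),
      (forall x y, br x y = - br y x)
    & (forall z : 'rV[R]_m, exists (k : nat) (c : 'I_k -> R) (xs ys : 'I_k -> 'rV[R]_n),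
          z = \sum_(i < k) c i *: br (xs i) (ys i))].

(* A_h(G): f is affine along every horizontal line t |-> p.(t y, 0). *)
Definition horiz_affine (V1 V2 : lmodType R) (br : V1 -> V1 -> V2)
  (f : V1 * V2 -> R) : Prop :=
  forall (p : V1 * V2) (y : V1), exists a b : R,
    forall t : R, f (cmul br p (t *: y, 0)) = a * t + b.

Definition affine (W : lmodType R) (f : W -> R) : Prop :=
  exists (L : W -> R) (c : R),
    (forall a u v, L (a *: u + v) = a * L u + L v) /\ (forall w, f w = L w + c).

(* Bracket of G x R^d on (V1 (+) R^d) x V2: [x+u, x'+u'] = [x,x']. *)
Definition br_ext (V1 V2 : lmodType R) (d : nat) (br : V1 -> V1 -> V2)
  (p q : V1 * 'rV[R]_d) : V2 := br p.1 q.1.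

End Carnot.

(* Main.v *)
Require Import Defs.
From HB Require Import structures.
From mathcomp Require Import all_boot all_order all_algebra.
From mathcomp Require Import reals.
From mathcomp Require Import ring lra.
Import GRing.Theory Num.Theory.
Local Open Scope ring_scope.

Section Aux.
Variable R : realType.

Lemma self_add0 (V : zmodType) (a : V) : a = a + a -> a = 0.
Proof. by move/(congr1 (fun w => w - a)); rewrite subrr addrK => /esym. Qed.

Lemma lin0 (W : lmodType R) (L : W -> R) :
  (forall a u v, L (a *: u + v) = a * L u + L v) -> L 0 = 0.
Proof. move=> HL; apply: self_add0; have := HL 1 0 0; by rewrite scale1r addr0 mul1r. Qed.

Lemma line_aff (g : R -> R) : (exists a b, forall t, g t = a * t + b) ->
  forall t, g t = g 0 + t * (g 1 - g 0).
Proof. case=> a [b H] t; rewrite !H; ring. Qed.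

Lemma quad0 (al be ga : R) :
  (exists a b, forall t : R, al + be * t + ga * t ^+ 2 = a * t + b) -> ga = 0.
Proof.
case=> a [b H]; have h0 := H 0; have h1 := H 1; have h2 := H (-1).
move: h0 h1 h2; rewrite !expr2; lra.
Qed.

Lemma affine_HA (V1 V2 : lmodType R) (br : V1 -> V1 -> V2) :
  (forall a x y y', br x (a *: y + y') = a *: br x y + br x y') ->
  forall f, affine f -> horiz_affine br f.
Proof.
move=> lin f [L [c [HL Hf]]] p y.
have br0 x : br x 0 = 0.
  by apply: self_add0; have := lin 1 x 0 0; rewrite !scale1r addr0; exact.
exists (L (y, br p.1 y)), (L p + c) => t.
rewrite Hf /cmul /=.
have -> : (p.1 + t *: y, p.2 + 0 + br p.1 (t *: y)) = t *: (y, br p.1 y) + p.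
  have := lin t p.1 y 0; rewrite addr0 br0 addr0 => ->.
  by case: p => p1 p2 /=; rewrite addr0 [p1 + _]addrC [p2 + _]addrC.
by rewrite HL addrA [t * _]mulrC.
Qed.
End Aux.

Theorem proposition6p3 (R : realType) (n m d : nat)
  (br : 'rV[R]_n -> 'rV[R]_n -> 'rV[R]_m) :
  (1 <= d)%N ->
  step_two_carnot br ->
  ((forall f : 'rV[R]_n * 'rV[R]_m -> R, horiz_affine br f <-> affine f) <->
   (forall f : ('rV[R]_n * 'rV[R]_d) * 'rV[R]_m -> R,
       horiz_affine (@br_ext R _ _ d br) f <-> affine f)).
Proof.
move=> _ [m0 linl linr skew span].
have br0r x : br x 0 = 0.
  by apply: self_add0; have := linr 1 x 0 0; rewrite !scale1r addr0; exact.
have br0l y : br 0 y = 0.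
  by apply: self_add0; have := linl 1 0 0 y; rewrite !scale1r addr0; exact.
have brZ x t y : br x (t *: y) = t *: br x y.
  by have := linr t x y 0; rewrite addr0 br0r addr0.
have linE : forall a (x : 'rV[R]_n * 'rV[R]_d) y y',
    br_ext br x (a *: y + y') = a *: br_ext br x y + br_ext br x y'.
  by move=> a x y y'; rewrite /br_ext /= linr.
split=> HG F; (split; last exact: affine_HA); move=> HF; last first.
  pose G := fun w : ('rV[R]_n * 'rV[R]_d) * 'rV[R]_m => F (w.1.1, w.2).
  have HAG : horiz_affine (br_ext br) G.
    move=> p y; case: (HF (p.1.1, p.2) y.1) => a [b H]; exists a, b => t.
    by rewrite -H.
  case: ((HG G).1 HAG) => L [c [HL HGL]].
  exists (fun w => L ((w.1, 0), w.2)), c; split.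
    move=> a u v /=; rewrite -HL; congr L.
    by rewrite [RHS](_ : _ = (a*:u.1+v.1, a*:(0:'rV[R]_d)+0, a*:u.2+v.2)) // scaler0 addr0.
  by move=> [x z]; exact: HGL ((x,0),z).
pose f_ u := fun w : 'rV[R]_n * 'rV[R]_m => F ((w.1, u), w.2).
have HAu u : horiz_affine br (f_ u).
  move=> p y; case: (HF ((p.1,u),p.2) (y,0)) => a [b H]; exists a, b => t.
  rewrite -H /f_ /cmul /=; congr F.
  by rewrite [LHS](_ : _ = (p.1 + t*:y, u + t*:(0:'rV[R]_d), p.2 + 0 + br p.1 (t*:y))) // scaler0 !addr0.
have affu u := (HG (f_ u)).1 (HAu u).
pose D x z u := F ((x,u),z) - F ((x,0),z) - F ((0,u),0) + F ((0,0),0).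
have Dlin u a x z x' z' : D (a*:x+x') (a*:z+z') u = a * D x z u + D x' z' u.
  case: (affu u) => L [c [HL Hf]]; case: (affu 0) => L0 [c0 [HL0 Hf0]].
  have e1 y w : F ((y,u),w) = L (y,w) + c by exact: (Hf (y,w)).
  have e0 y w : F ((y,0),w) = L0 (y,w) + c0 by exact: (Hf0 (y,w)).
  have l1 b y w y' w' : L (b*:y+y', b*:w+w') = b * L (y,w) + L (y',w') by exact: (HL b (y,w) (y',w')).
  have l0 b y w y' w' : L0 (b*:y+y', b*:w+w') = b * L0 (y,w) + L0 (y',w') by exact: (HL0 b (y,w) (y',w')).
  have z1 : L (0,0) = 0 by move: (@lin0 _ _ _ HL).
  have z0 : L0 (0,0) = 0 by move: (@lin0 _ _ _ HL0).
  rewrite /D !e1 !e0 !l1 !l0 z1 z0; ring.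
have D00 u : D 0 0 u = 0 by rewrite /D; ring.
have DD x z x' z' u : D (x+x') (z+z') u = D x z u + D x' z' u.
  by have := Dlin u 1 x z x' z'; rewrite !scale1r mul1r.
have DZ a x z u : D (a*:x) (a*:z) u = a * D x z u.
  by have := Dlin u a x z 0 0; rewrite !addr0 D00 addr0.
have lineU x z p v t : F ((x, p + t*:v), z) = F ((x,p),z) + t * (F ((x,p+v),z) - F ((x,p),z)).
  have H : exists a b, forall t, (fun t => F ((x, p + t*:v), z)) t = a * t + b.
    case: (HF ((x,p),z) (0,v)) => a [b H]; exists a, b => s; rewrite -H /cmul /=.
    congr F; by rewrite [RHS](_ : _ = (x + s*:(0:'rV[R]_n), p + s*:v, z + 0 + br x (s*:0))) // !scaler0 br0r !addr0.
  by rewrite (@line_aff _ _ H) /= scale0r scale1r addr0.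
have lineU0 x z v t : F ((x, t*:v), z) = F ((x,0),z) + t * (F ((x,v),z) - F ((x,0),z)).
  by have := lineU x z 0 v t; rewrite !add0r.
have Dhom x z v t : D x z (t*:v) = t * D x z v.
  by rewrite /D !lineU0; ring.
have key x y v : D y (br x y) v = 0.
  case: (affu 0) => L0 [c0 [HL0 Hf0]].
  have e0 y' w : F ((y',0),w) = L0 (y',w) + c0 by exact: (Hf0 (y',w)).
  have l0 b y1 w y' w' : L0 (b*:y1+y', b*:w+w') = b * L0 (y1,w) + L0 (y',w') by exact: (HL0 b (y1,w) (y',w')).
  have E t : F ((x + t*:y, t*:v), t*:br x y) = (L0 (x,0) + c0) + (L0 (y, br x y) + (F((0,v),0) - F((0,0),0)) + D x 0 v) * t + D y (br x y) v * t^+2.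
    have -> : F ((x + t*:y, t*:v), t*:br x y) = D (x + t*:y) (t*:br x y) (t*:v) + F ((x + t*:y, 0), t*:br x y) + F ((0, t*:v), 0) - F ((0,0),0) by rewrite /D; ring.
    rewrite Dhom e0 lineU0 [x + _]addrC -[t*:br x y]addr0 Dlin l0 expr2; ring.
  apply: (@quad0 _ (L0 (x,0)+c0) (L0 (y, br x y) + (F((0,v),0) - F((0,0),0)) + D x 0 v)); case: (HF ((x,0),0) (y,v)) => a [b H]; exists a, b => t; rewrite -E -H.
  congr F; rewrite [RHS](_ : _ = (x + t*:y, 0 + t*:v, 0 + 0 + br x (t*:y))) //.
  by rewrite brZ !add0r.
have Dy0 y v : D y 0 v = 0 by have := key 0 y v; rewrite br0l.
have D0b x y v : D 0 (br x y) v = 0.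
  by have := DD y 0 0 (br x y) v; rewrite addr0 add0r key Dy0 add0r.
have D0z z v : D 0 z v = 0.
  case: (span z) => k [c [xs [ys ->]]].
  elim/big_ind: _ => [|z1 z2 h1 h2|i _]; first exact: D00.
    by have := DD 0 z1 0 z2 v; rewrite addr0 h1 h2 addr0.
  by have := DZ (c i) 0 (br (xs i) (ys i)) v; rewrite scaler0 D0b mulr0.
have DX x z v : D x z v = 0.
  by have := DD x 0 0 z v; rewrite addr0 add0r Dy0 D0z addr0.
pose h u := F ((0,u),0) - F ((0,0),0).
have hhom v t : h (t*:v) = t * h v by rewrite /h lineU0; ring.
have hadd u v : h (u+v) = h u + h v.
  have e1 : 2*:u + 2*:(v-u) = 2*:v by rewrite -scalerDr [u + _]addrC subrK.
  have e2 : 2*:u + (v-u) = u+v.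
    by rewrite scaler_nat mulr2n -addrA [u + (v-u)]addrC subrK.
  have := lineU 0 0 (2*:u) (v-u) 2; rewrite e1 e2 !lineU0 /h => H; lra.
case: (affu 0) => L0 [c0 [HL0 Hf0]].
have e0 y' w : F ((y',0),w) = L0 (y',w) + c0 by exact: (Hf0 (y',w)).
have l0 b y1 w y' w' : L0 (b*:y1+y', b*:w+w') = b * L0 (y1,w) + L0 (y',w') by exact: (HL0 b (y1,w) (y',w')).
exists (fun w => L0 (w.1.1, w.2) + h w.1.2), c0; split.
  by move=> a w w' /=; rewrite l0 hadd hhom; ring.
move=> [[x u] z] /=; have := DX x z u; rewrite /D e0 /h => H; lra.
Qed.
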